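(* Let $G=A_n$ or $S_n$ with $n\ge 5$, acting naturally on the set of $k$-element subsets of $\{1,\dots,n\}$, where $1\le k<n/2$. Then $G$ is $\tfrac{3}{2}$-transitive if and only if either $k=1$, or $n=7$ and $k=2$.
   Context: A finite transitive permutation group $G$ on $\Omega$ is $\tfrac{3}{2}$-transitive if for $\alpha\in\Omega$ all orbits of $G_\alpha$ on $\Omega\setminus\{\alpha\}$ have the same size, greater than $1$. *)

(* Defs.v *)
From mathcomp Require Import all_boot all_fingroup all_solvable.
Set Implicit Arguments. Unset Strict Implicit. Unset Printing Implicit Defensive.
Local Open Scope group_scope.

Definition three_halves_transitive (aT : finGroupType) (D : {set aT})
    (T : finType) (to : action D T) (G : {set aT}) (Om : {set T}) : Prop :=
  [transitive G, on Om | to] /\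
  forall a, a \in Om -> forall x y, x \in Om :\ a -> y \in Om :\ a ->
    #|orbit to 'C_G[a | to] x| = #|orbit to 'C_G[a | to] y| /\
    1 < #|orbit to 'C_G[a | to] x|.

Definition ksubsets (n k : nat) : {set {set 'I_n}} :=
  [set A : {set 'I_n} | #|A| == k].

(* Main.v *)
Require Import Defs.
From mathcomp Require Import all_boot all_fingroup all_solvable.
From mathcomp Require Import zify.
From Stdlib Require Import Lia.
Set Implicit Arguments. Unset Strict Implicit. Unset Printing Implicit Defensive.

Lemma count_enumT (T : finType) (P : pred T) : count P (enum T) = #|P|.
Proof.
rewrite cardE /enum_mem size_filter.
rewrite (@eq_filter _ _ predT) ?filter_predT //.
Qed.

Lemma count_FenumT (T : finType) (P : pred T) : count P (Finite.enum T) = #|P|.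
Proof. by rewrite cardE /enum_mem size_filter. Qed.

Lemma relabel (T : finType) (l1 l2 : T -> nat) :
  (forall i, #|[set z | l1 z == i]| = #|[set z | l2 z == i]|) ->
  exists p : {perm T}, forall z, l2 (p z) = l1 z.
Proof.
move=> Hc.
set s1 := sort (relpre l1 leq) (enum T).
set s2 := sort (relpre l2 leq) (enum T).
have tot1 : total (relpre l1 leq) by move=> x y; exact: leq_total.
have tot2 : total (relpre l2 leq) by move=> x y; exact: leq_total.
have Es : map l1 s1 = map l2 s2.
  apply: (@sorted_eq _ leq leq_trans anti_leq).
  - by rewrite sorted_map; apply: sort_sorted.
  - by rewrite sorted_map; apply: sort_sorted.
  have P1 : perm_eq (map l1 s1) (map l1 (enum T)) by apply: perm_map; rewrite perm_sort.
  have P2 : perm_eq (map l2 s2) (map l2 (enum T)) by apply: perm_map; rewrite perm_sort.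
  rewrite (permPl P1) (permPr P2).
  apply/allP => x _; apply/eqP.
  rewrite !count_map !count_FenumT.
  have e1 : #|preim l1 (pred1 x)| = #|[set z | l1 z == x]| by apply: eq_card => z; rewrite inE.
  have e2 : #|preim l2 (pred1 x)| = #|[set z | l2 z == x]| by apply: eq_card => z; rewrite inE.
  by rewrite e1 e2 Hc.
have sz1 : size s1 = #|T| by rewrite size_sort cardT.
have sz2 : size s2 = #|T| by rewrite size_sort cardT.
have in1 : forall x, x \in s1 by move=> x; rewrite mem_sort mem_enum.
have u1 : uniq s1 by rewrite sort_uniq enum_uniq.
have u2 : uniq s2 by rewrite sort_uniq enum_uniq.
pose f x := nth x s2 (index x s1).
have lt1 : forall x, index x s1 < #|T| by move=> x; rewrite -sz1 index_mem.
have finj : injective f.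
  move=> x y; rewrite /f => E.
  have : nth x s2 (index x s1) == nth x s2 (index y s1).
    by rewrite E (set_nth_default x y) // sz2.
  rewrite nth_uniq ?sz2 // => /eqP Ei.
  by rewrite -(nth_index x (in1 x)) Ei (set_nth_default y x) ?sz1 // nth_index.
exists (perm finj) => z; rewrite permE /f.
rewrite -(nth_map z (l2 z)) ?sz2 // -Es (nth_map z) ?sz1 //.
by rewrite nth_index.
Qed.

Lemma relabel_even (T : finType) (l1 l2 : T -> nat) x y :
  x != y -> l1 x = l1 y ->
  (forall i, #|[set z | l1 z == i]| = #|[set z | l2 z == i]|) ->
  exists p : {perm T}, ~~ odd_perm p /\ forall z, l2 (p z) = l1 z.
Proof.
move=> nxy lxy Hc; have [p Hp] := relabel Hc.
case op : (odd_perm p); last by exists p; rewrite op.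
exists (tperm x y * p)%g; split.
  by rewrite odd_permM odd_tperm nxy op.
move=> z; rewrite permM Hp; case: tpermP => [->|->|] //.
Qed.

Section Move.
Variables (T : finType) (A : {set T}).
Definition lab (S : {set T}) (z : T) : nat := 2 * (z \in A) + (z \in S).

Lemma classcard S i : #|[set z | lab S z == i]| =
  match i with 0 => #|T| - (#|A| + #|S| - #|A :&: S|)
  | 1 => #|S| - #|A :&: S| | 2 => #|A| - #|A :&: S| | 3 => #|A :&: S| | _ => 0 end.
Proof.
case: i => [|[|[|[|i]]]].
- have -> : [set z | lab S z == 0] = ~: (A :|: S).
    by apply/setP => z; rewrite !inE /lab; case: (z \in A); case: (z \in S).
  by rewrite -cardsU; have := cardsC (A :|: S); lia.
- have -> : [set z | lab S z == 1] = S :\: A.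
    by apply/setP => z; rewrite !inE /lab; case: (z \in A); case: (z \in S).
  by have := cardsID A S; rewrite setIC; lia.
- have -> : [set z | lab S z == 2] = A :\: S.
    by apply/setP => z; rewrite !inE /lab; case: (z \in A); case: (z \in S).
  by have := cardsID S A; lia.
- have -> : [set z | lab S z == 3] = A :&: S.
    by apply/setP => z; rewrite !inE /lab; case: (z \in A); case: (z \in S).
  by [].
- apply/eqP; rewrite cards_eq0; apply/eqP/setP => z; rewrite !inE /lab.
  by case: (z \in A); case: (z \in S).
Qed.

Lemma move (B C : {set T}) : 4 < #|T| -> #|B| = #|C| -> #|A :&: B| = #|A :&: C| ->
  exists2 p : {perm T}, p \in ('Alt_T)%g & (p @: A = A /\ p @: B = C).
Proof.
move=> hT hBC hABC.
have Hc : forall i, #|[set z | lab B z == i]| = #|[set z | lab C z == i]|.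
  by move=> i; rewrite !classcard hBC hABC.
have [i Hi] : exists i, 1 < #|[set z | lab B z == i]|.
  have := classcard B 0; have := classcard B 1; have := classcard B 2; have := classcard B 3.
  have h1 := subset_leq_card (subsetIl A B).
  have h2 := subset_leq_card (subsetIr A B).
  have h3 : #|A :|: B| <= #|T| by apply: max_card.
  rewrite cardsU in h3.
  case: (ltnP 1 #|[set z | lab B z == 0]|) => [h|h0]; first by exists 0.
  case: (ltnP 1 #|[set z | lab B z == 1]|) => [h|h1']; first by exists 1.
  case: (ltnP 1 #|[set z | lab B z == 2]|) => [h|h2']; first by exists 2.
  case: (ltnP 1 #|[set z | lab B z == 3]|) => [h|h3']; first by exists 3.
  lia.
have [x [y [xi yi nxy]]] := card_gt1P Hi.
rewrite !inE in xi yi.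
have [p [ev Hp]] := relabel_even nxy (etrans (eqP xi) (esym (eqP yi))) Hc.
exists p; first by rewrite Alt_even.
have key : forall z, (p z \in A) = (z \in A) /\ (p z \in C) = (z \in B).
  move=> z; have := Hp z; rewrite /lab.
  by case: (p z \in A); case: (z \in A); case: (p z \in C); case: (z \in B).
split; apply/setP => w; rewrite -{1}(permKV p w) mem_imset; try exact: perm_inj.
  by case: (key (p^-1 w)%g); rewrite permKV.
by case: (key (p^-1 w)%g); rewrite permKV.
Qed.
End Move.

Lemma PsE (T : finType) (S : {set T}) (g : {perm T}) : ('P^*)%act S g = g @: S.
Proof. by []. Qed.

Lemma orbitStab (T : finType) (G : {group {perm T}}) (A B : {set T}) :
  4 < #|T| -> ('Alt_T \subset G)%g ->
  orbit ('P^*)%act ('C_G[A | 'P^*])%g B =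
    [set C : {set T} | (#|C| == #|B|) && (#|A :&: C| == #|A :&: B|)].
Proof.
move=> hT sAG; apply/setP => C; rewrite inE; apply/orbitP/andP.
  move=> [g /setIP[gG /astab1P gA] <-]; rewrite PsE in gA; rewrite PsE.
  split; apply/eqP; rewrite ?card_imset //; try exact: perm_inj.
  rewrite -{1}gA -imsetI; last by move=> u v _ _; apply: perm_inj.
  by rewrite card_imset //; exact: perm_inj.
move=> [/eqP hc /eqP hi].
have [p pA [hA hB]] := move hT (esym hc) (esym hi).
exists p; last by rewrite PsE.
apply/setIP; split; first exact: (subsetP sAG _ pA).
by apply/astab1P; rewrite PsE.
Qed.

Lemma orbitFull (T : finType) (G : {group {perm T}}) (B : {set T}) :
  4 < #|T| -> ('Alt_T \subset G)%g ->
  orbit ('P^*)%act G B = [set C : {set T} | #|C| == #|B|].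
Proof.
move=> hT sAG; apply/setP => C; rewrite inE; apply/orbitP/eqP.
  move=> [g _ <-]; rewrite PsE card_imset //; exact: perm_inj.
move=> hc.
have E0 : #|set0 :&: B| = #|set0 :&: C| by rewrite !set0I.
have [p pA [_ hB]] := @move T set0 B C hT (esym hc) E0.
by exists p; [exact: (subsetP sAG _ pA) | rewrite PsE].
Qed.

Lemma split_sets (T : finType) (A X Y : {set T}) : X \subset A -> Y \subset ~: A ->
  A :&: (X :|: Y) = X /\ ~: A :&: (X :|: Y) = Y.
Proof.
move=> /subsetP sX /subsetP sY; split; apply/setP => z; rewrite !inE;
  have := sX z; have := sY z; rewrite !inE;
  by case: (z \in A); case: (z \in X); case: (z \in Y) => //= H1 H2;
     try (by move: (H1 isT)); try (by move: (H2 isT)).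
Qed.

Lemma count_sets (T : finType) (A : {set T}) k j : j <= k ->
  #|[set C : {set T} | (#|C| == k) && (#|A :&: C| == j)]| =
  'C(#|A|, j) * 'C(#|T| - #|A|, k - j).
Proof.
move=> jk.
pose D := setX [set X : {set T} | X \subset A & #|X| == j]
               [set Y : {set T} | Y \subset ~: A & #|Y| == k - j].
pose f (p : {set T} * {set T}) := p.1 :|: p.2.
have -> : [set C : {set T} | (#|C| == k) && (#|A :&: C| == j)] = f @: D.
  apply/setP => C; rewrite inE; apply/andP/imsetP.
    move=> [/eqP hC /eqP hA]; exists (A :&: C, ~: A :&: C).
      rewrite !inE subsetIl subsetIl hA eqxx /=.
      have := cardsID A C; rewrite setDE setIC [~: A :&: C]setIC hA.
      by move=> e; apply/eqP; lia.
    by rewrite /f /=; apply/setP => z; rewrite !inE; case: (z \in A); case: (z \in C).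
  move=> [[X Y]]; rewrite !inE /f /= => /andP[/andP[sX /eqP cX] /andP[sY /eqP cY]] ->.
  have [e1 _] := split_sets sX sY.
  rewrite e1 cX eqxx; split => //; rewrite cardsU.
  have -> : X :&: Y = set0.
    apply/setP => z; rewrite !inE; have := subsetP sX z; have := subsetP sY z.
    by rewrite !inE; case: (z \in A); case: (z \in X); case: (z \in Y) => //= H1 H2;
     try (by move: (H1 isT)); try (by move: (H2 isT)).
  by rewrite cards0 cX cY; apply/eqP; lia.
rewrite card_in_imset; last first.
  move=> [X1 Y1] [X2 Y2]; rewrite !inE /f /=.
  move=> /andP[/andP[sX1 _] /andP[sY1 _]] /andP[/andP[sX2 _] /andP[sY2 _]] E.
  have [a1 b1] := split_sets sX1 sY1; have [a2 b2] := split_sets sX2 sY2.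
  by congr pair; [rewrite -a1 E a2 | rewrite -b1 E b2].
rewrite cardsX !cards_draws.
by have := cardsC A; move=> e; rewrite -e addKn.
Qed.


Lemma arith k m : 2 <= k -> k < m -> k * m = 'C(k,2) * 'C(m,2) -> k = 2 /\ m = 5.
Proof.
case: k => [|[|p]] //; case: m => [|[|q]] // _ lt E.
have h1 := mul_bin_left p.+2 1; have h2 := mul_bin_left q.+2 1.
rewrite !bin1 in h1 h2.
have h3 : (p.+2 * q.+2) * 4 = (p.+2 * q.+2) * (p.+1 * q.+1).
  have -> : (p.+2 * q.+2) * 4 = (2 * 'C(p.+2, 2)) * (2 * 'C(q.+2, 2)).
    by rewrite mulnACA -E mulnC.
  rewrite h1 h2; have -> : p.+2 - 1 = p.+1 by lia.
  have -> : q.+2 - 1 = q.+1 by lia.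
  by rewrite mulnACA mulnC.
move/eqP: h3; rewrite eqn_pmul2l // => /eqP h4.
clear E h1 h2; case: p h4 lt => [|p] h4 lt.
  by rewrite mul1n in h4; split => //; lia.
have : 2 * 3 <= p.+2 * q.+1 by apply: leq_mul; lia.
lia.
Qed.

Theorem lemma4p3 (n k : nat) (G : {group {perm 'I_n}}) :
  5 <= n -> 1 <= k -> k.*2 < n ->
  (G = ('Alt_('I_n))%G \/ G = ('Sym_('I_n))%G) ->
  (three_halves_transitive ('P^*)%act G (ksubsets n k) <->
   k = 1 \/ (n = 7 /\ k = 2)).
Proof.
move=> n5 k1 k2n HG.
have sAG : ('Alt_('I_n) \subset G)%g.
  by case: HG => ->; [exact: subxx | exact: subsetT].
have hT : 4 < #|'I_n| by rewrite card_ord.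
have kn : k <= n by rewrite -addnn in k2n; lia.
have osz : forall a x, a \in ksubsets n k -> x \in ksubsets n k ->
    #|orbit ('P^*)%act ('C_G[a | 'P^*])%g x| =
    'C(k, #|a :&: x|) * 'C(n - k, k - #|a :&: x|).
  move=> a x; rewrite !inE => /eqP ha /eqP hx.
  rewrite orbitStab // hx count_sets ?ha ?card_ord //.
  by rewrite -hx; apply: subset_leq_card; apply: subsetIr.
have jlt : forall a x, a \in ksubsets n k -> x \in ksubsets n k :\ a ->
    #|a :&: x| < k.
  move=> a x; rewrite !inE => /eqP ha /andP[xa /eqP hx].
  rewrite ltn_neqAle -{2}ha subset_leq_card ?subsetIl // andbT.
  apply/eqP => e.
  have e1 : a :&: x = a by apply/eqP; rewrite eqEcard subsetIl ha e leqnn.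
  have e2 : a :&: x = x by apply/eqP; rewrite eqEcard subsetIr hx e leqnn.
  by move: xa; rewrite -e2 e1 eqxx.
have [a0 a0O] : exists a0, a0 \in ksubsets n k.
  apply/card_gt0P; rewrite /ksubsets card_draws card_ord bin_gt0 //.
rewrite inE in a0O.
split.
  move=> [_ H].
  case: (eqVneq k 1) => [-> | k1']; [by left | right].
  have k2 : 2 <= k by lia.
  have ex : forall i, i <= k -> k - i <= n - k ->
      exists x : {set 'I_n}, (#|x| == k) && (#|a0 :&: x| == i).
    move=> i ik kin.
    have : 0 < #|[set x : {set 'I_n} | (#|x| == k) && (#|a0 :&: x| == i)]|.
      by rewrite count_sets // card_ord (eqP a0O) muln_gt0 !bin_gt0 ik kin.
    by move/card_gt0P => [x]; rewrite inE => hx; exists x.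
  have [x /andP[/eqP xk /eqP xi]] := ex (k - 1) (leq_subr _ _) (ltac:(lia)).
  have [y /andP[/eqP yk /eqP yi]] := ex (k - 2) (leq_subr _ _) (ltac:(lia)).
  have a0O' : a0 \in ksubsets n k by rewrite inE.
  have xO : x \in ksubsets n k :\ a0.
    rewrite !inE xk eqxx andbT; apply/eqP => e; move: xi; rewrite e setIid (eqP a0O); lia.
  have yO : y \in ksubsets n k :\ a0.
    rewrite !inE yk eqxx andbT; apply/eqP => e; move: yi; rewrite e setIid (eqP a0O); lia.
  have [E _] := H a0 a0O' x y xO yO.
  rewrite (osz _ _ a0O' (subsetP (subsetDl _ _) _ xO)) in E.
  rewrite (osz _ _ a0O' (subsetP (subsetDl _ _) _ yO)) in E.
  rewrite xi yi !bin_sub // in E; try lia.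
  have e1 : k - (k - 1) = 1 by lia.
  have e2 : k - (k - 2) = 2 by lia.
  rewrite e1 e2 !bin1 in E.
  have kk : k < n - k by rewrite -addnn in k2n; lia.
  have [hk hm] := arith k2 kk E.
  split; lia.
move=> Hk; split.
  apply/imsetP; exists a0; first by rewrite inE.
  rewrite orbitFull //; apply/setP => C; by rewrite !inE (eqP a0O).
move=> a aO x y xO yO.
have xO' := subsetP (subsetDl _ _) _ xO; have yO' := subsetP (subsetDl _ _) _ yO.
rewrite (osz _ _ aO xO') (osz _ _ aO yO').
have jx := jlt a x aO xO; have jy := jlt a y aO yO.
move: (#|a :&: x|) (#|a :&: y|) jx jy => jx jy hx hy.
case: Hk => [ek | [en ek]].
  subst k; have -> : jx = 0 by lia.
  have -> : jy = 0 by lia.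
  by rewrite bin0 !bin1 mul1n; split => //; lia.
subst k n.
by move: jx jy hx hy => [|[|?]] [|[|?]].
Qed.
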